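(* Let $1\le r\le n$, let $B^{(1)},\dots,B^{(r)}\in\mathbb{C}^{n\times n}$ be Hermitian, and let $\tilde g(U)=\sum_{q=1}^ru_q^HB^{(q)}u_q$ for $U=(u_1,\dots,u_n)\in\mathcal{U}_n$. Let $U\in\mathcal{U}_n$ and $1\le i<j\le n$ with $i\le r$. Then there exist a real symmetric $M\in\mathbb{R}^{3\times3}$ and $C\in\mathbb{R}$ such that $\tilde g(UG_{ij}(\Psi(\theta,\phi)))=z_{1,1}(\theta,\phi)^TMz_{1,1}(\theta,\phi)+C$ for all $\theta,\phi\in\mathbb{R}$.
   Context: $\mathcal{U}_n$ is the group of $n\times n$ unitary matrices. $G_{ij}(\Psi)$ is the $n\times n$ identity with entries $(i,i),(i,j),(j,i),(j,j)$ replaced by $\Psi_{11},\Psi_{12},\Psi_{21},\Psi_{22}$; $\Psi(\theta,\phi)=\begin{bmatrix}\cos\theta&-\sin\theta e^{\mathrm{i}\phi}\\ \sin\theta e^{-\mathrm{i}\phi}&\cos\theta\end{bmatrix}$; $z_{1,1}(\theta,\phi)=(\cos\theta,-\sin\theta\cos\phi,-\sin\theta\sin\phi)^T$. *)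

(* Defs.v *)
From HB Require Import structures.
From mathcomp Require Import all_boot all_order all_algebra.
From mathcomp Require Import complex.
From mathcomp Require Import reals trigo.
Set Implicit Arguments. Unset Strict Implicit. Unset Printing Implicit Defensive.
Import Order.TTheory GRing.Theory Num.Theory.
Local Open Scope ring_scope.
Local Open Scope complex_scope.

Section Defs.
Variable R : realType.
Local Notation C := R[i].

Definition ctrmx (m n : nat) (A : 'M[C]_(m, n)) : 'M[C]_(n, m) :=
  map_mx (fun z : C => z^*) A^T.

Definition hermitian_mx (n : nat) (A : 'M[C]_n) : Prop := ctrmx A = A.

Definition unitary_mx (n : nat) (U : 'M[C]_n) : Prop := U *m ctrmx U = 1%:M.

Definition Psi (theta phi : R) : 'M[C]_2 :=
  let e := (cos phi +i* sin phi) in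
  let e' := (cos phi +i* (- sin phi)) in
  \matrix_(a < 2, b < 2)
    if (a == 0%N :> nat) && (b == 0%N :> nat) then (cos theta)%:C
    else if (a == 0%N :> nat) then - ((sin theta)%:C * e)
    else if (b == 0%N :> nat) then (sin theta)%:C * e'
    else (cos theta)%:C.

Definition Gmx (n : nat) (i j : 'I_n) (P : 'M[C]_2) : 'M[C]_n :=
  \matrix_(k < n, l < n)
    if (k == i) && (l == i) then P 0 0
    else if (k == i) && (l == j) then P 0 1
    else if (k == j) && (l == i) then P 1 0
    else if (k == j) && (l == j) then P 1 1
    else (k == l)%:R.

Definition z11 (theta phi : R) : 'cV[R]_3 :=
  \col_(a < 3)
    if (a == 0%N :> nat) then cos theta
    else if (a == 1%N :> nat) then - (sin theta * cos phi)
    else - (sin theta * sin phi).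

Definition gtilde (n r : nat) (hr : (r <= n)%N) (B : 'I_r -> 'M[C]_n)
  (U : 'M[C]_n) : C :=
  \sum_(q < r)
    (ctrmx (col (widen_ord hr q) U) *m B q *m col (widen_ord hr q) U) 0 0.

End Defs.

(* Main.v *)
Require Import Defs.
From HB Require Import structures.
From mathcomp Require Import all_boot all_order all_algebra.
From mathcomp Require Import complex.
From mathcomp Require Import reals trigo.
From mathcomp Require Import ring lra.
Import Order.TTheory GRing.Theory Num.Theory.
Local Open Scope ring_scope.
Local Open Scope complex_scope.

Set Implicit Arguments. Unset Strict Implicit.
Section Aux.
Variable R : realType.
Local Notation C := R[i].

Lemma ctrmx_mul m n p (A : 'M[C]_(m, n)) (B : 'M[C]_(n, p)) :
  ctrmx (A *m B) = ctrmx B *m ctrmx A.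
Proof. by rewrite /ctrmx trmx_mul map_mxM. Qed.

Lemma ctrmxK m n (A : 'M[C]_(m, n)) : ctrmx (ctrmx A) = A.
Proof. by apply/matrixP => a b; rewrite !mxE conjcK. Qed.

Lemma ctrmx_lin m n (a b : C) (x y : 'M[C]_(m, n)) :
  ctrmx (a *: x + b *: y) = (conjc a) *: ctrmx x + (conjc b) *: ctrmx y.
Proof. by apply/matrixP => k l; rewrite !mxE rmorphD !rmorphM. Qed.

Lemma e_add (A B : 'M[C]_(1,1)) : (A + B) 0 0 = A 0 0 + B 0 0.
Proof. by rewrite mxE. Qed.
Lemma e_scale a (A : 'M[C]_(1,1)) : (a *: A) 0 0 = a * A 0 0.
Proof. by rewrite mxE. Qed.

Definition H n (B : 'M[C]_n) (x y : 'cV[C]_n) : C := (ctrmx x *m B *m y) 0 0.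

Lemma H_lin n (B : 'M[C]_n) a b x y :
  H B (a *: x + b *: y) (a *: x + b *: y) =
  conjc a * a * H B x x + conjc a * b * H B x y + conjc b * a * H B y x + conjc b * b * H B y y.
Proof.
rewrite /H ctrmx_lin.
rewrite !mulmxDl.
rewrite !mulmxDr.
rewrite -!scalemxAl.
rewrite -!scalemxAr.
move: (ctrmx x *m B *m x) (ctrmx x *m B *m y) (ctrmx y *m B *m x) (ctrmx y *m B *m y).
move=> M1 M2 M3 M4.
rewrite !e_add !e_scale.
ring.
Qed.

Lemma H_herm n (B : 'M[C]_n) x y : hermitian_mx B -> H B y x = (conjc (H B x y)).
Proof.
move=> hB; rewrite /H.
have -> : (conjc (H B x y)) = (ctrmx (ctrmx x *m B *m y)) 0 0 by rewrite /H !mxE.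
by rewrite !ctrmx_mul ctrmxK hB mulmxA.
Qed.


Lemma colG n (i j : 'I_n) (P : 'M[C]_2) (k : 'I_n) : i != j ->
  col k (Gmx i j P) =
  if k == i then P 0 0 *: col i 1%:M + P 1 0 *: col j 1%:M
  else if k == j then P 0 1 *: col i 1%:M + P 1 1 *: col j 1%:M
  else col k 1%:M.
Proof.
move=> nij; apply/matrixP => l z.
have nji : j != i by rewrite eq_sym.
have [->|ki] := eqVneq k i; last have [->|kj] := eqVneq k j;
  rewrite !mxE ?eqxx ?(negbTE nij) ?(negbTE nji) ?(negbTE ki) ?andbT ?andbF /=;
  (have [?|li] := eqVneq l i; last have [?|lj] := eqVneq l j); subst;
  rewrite /= ?mxE ?eqxx ?(negbTE nij) ?(negbTE nji) ?(negbTE ki) ?(negbTE kj)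
     ?(negbTE li) ?(negbTE lj) ?andbT ?andbF /=; try ring.
Qed.

Lemma colV n (i j : 'I_n) (P : 'M[C]_2) (U : 'M[C]_n) (k : 'I_n) : i != j ->
  col k (U *m Gmx i j P) =
  if k == i then P 0 0 *: col i U + P 1 0 *: col j U
  else if k == j then P 0 1 *: col i U + P 1 1 *: col j U
  else col k U.
Proof.
move=> nij; rewrite colE -mulmxA -colE colG //.
have cU : forall l, U *m col l 1%:M = col l U.
  by move=> l; rewrite col1 colE.
by case: ifP => _; [|case: ifP => _]; rewrite ?mulmxDr -?scalemxAr ?cU.
Qed.

Lemma real_of_conj (z : C) : (conjc z) = z -> exists x : R, z = x%:C.
Proof.
case: z => x y /= [] Hy; exists x; have -> : y = 0 by lra.
by [].
Qed.

Lemma conjcM' (x y : C) : conjc (x * y) = conjc x * conjc y.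
Proof. exact: rmorphM. Qed.
Lemma conjcN' (x : C) : conjc (- x) = - conjc x.
Proof. exact: rmorphN. Qed.
Lemma conjcR (x : R) : conjc (x%:C) = x%:C.
Proof. by rewrite /= oppr0. Qed.

Lemma conjc_sum (I : finType) (F : I -> C) : (conjc (\sum_i F i)) = \sum_i (conjc (F i)).
Proof. by rewrite rmorph_sum. Qed.

Lemma idP_ring (u v : R[i]) : u = v -> u = v. Proof. by []. Qed.

End Aux.

Theorem corollary3p6 (R : realType) (n r : nat) (hr1 : (1 <= r)%N)
  (hr : (r <= n)%N) (B : 'I_r -> 'M[R[i]]_n)
  (hB : forall q, hermitian_mx (B q))
  (U : 'M[R[i]]_n) (hU : unitary_mx U) (i j : 'I_n)
  (hij : (i < j)%N) (hir : (i < r)%N) :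
  exists (M : 'M[R]_3) (c : R), M^T = M /\
    forall theta phi : R,
      gtilde hr B (U *m Gmx i j (Psi theta phi)) =
      (((z11 theta phi)^T *m M *m z11 theta phi) 0 0 + c)%:C.
Proof.
have nij : i != j by rewrite neq_ltn hij.
pose w := fun q : 'I_r => widen_ord hr q.
pose ui := col i U; pose uj := col j U.
pose A := fun q => if w q == i then H (B q) ui ui else if w q == j then H (B q) uj uj else 0.
pose Bb := fun q => if w q == i then H (B q) uj uj else if w q == j then H (B q) ui ui else 0.
pose G := fun q => if w q == i then H (B q) ui uj else if w q == j then - H (B q) ui uj else 0.
pose K := fun q => if w q == i then 0 else if w q == j then 0
  else H (B q) (col (w q) U) (col (w q) U).
have Hre : forall q x, (conjc (H (B q) x x)) = H (B q) x x by move=> q x; rewrite -(H_herm x x (hB q)).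
have realA : (conjc (\sum_q A q)) = \sum_q A q.
  rewrite conjc_sum; apply eq_bigr => q _; rewrite /A.
  by case: ifP => _; [|case: ifP => _]; rewrite ?conjc0 ?Hre.
have realB : (conjc (\sum_q Bb q)) = \sum_q Bb q.
  rewrite conjc_sum; apply eq_bigr => q _; rewrite /Bb.
  by case: ifP => _; [|case: ifP => _]; rewrite ?rmorph0 ?Hre.
have realK : (conjc (\sum_q K q)) = \sum_q K q.
  rewrite conjc_sum; apply eq_bigr => q _; rewrite /K.
  by case: ifP => _; [|case: ifP => _]; rewrite ?rmorph0 ?Hre.
have [a Ea] := real_of_conj realA.
have [b Eb] := real_of_conj realB.
have [k Ek] := real_of_conj realK.
case EG: (\sum_q G q) => [g1 g2].
pose mf := fun x y : nat => if x == y then (if x == 0%N then a else b)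
  else if (x + y == 1)%N then - g1 else if (x + y == 2)%N then - g2 else 0.
exists (\matrix_(x < 3, y < 3) mf x y), k; split.
  apply/matrixP => x y; rewrite !mxE /mf (eq_sym (nat_of_ord y)) (addnC (nat_of_ord y)).
  by case: eqP => // ->.
move=> th ph.
have Je : forall x y : R, (conjc (x +i* y)) = x +i* - y by [].
have key : gtilde hr B (U *m Gmx i j (Psi th ph)) =
  \sum_q ((cos th)%:C ^+ 2 * A q
     + ((sin th)%:C ^+ 2 * ((cos ph +i* sin ph) * (cos ph +i* - sin ph))) * Bb q
     + (cos th * sin th)%:C * (G q * (cos ph +i* - sin ph) + (conjc (G q)) * (cos ph +i* sin ph))
     + K q).
  have P00 : Psi th ph 0 0 = (cos th)%:C by rewrite /Psi mxE.
  have P11 : Psi th ph 1 1 = (cos th)%:C by rewrite /Psi mxE.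
  have P01 : Psi th ph 0 1 = - ((sin th)%:C * (cos ph +i* sin ph)) by rewrite /Psi mxE.
  have P10 : Psi th ph 1 0 = (sin th)%:C * (cos ph +i* - sin ph) by rewrite /Psi mxE.
  rewrite /gtilde; apply eq_bigr => q _.
  have -> : forall (M : 'M[R[i]]_n) x, (ctrmx x *m M *m x) 0 0 = H M x x by [].
  rewrite colV // /A /Bb /G /K -/(w q) -/ui -/uj.
  case: ifP => _; [|case: ifP => _]; last by apply: (@idP_ring R); ring.
    rewrite H_lin (H_herm ui uj (hB q)) ?P00 ?P01 ?P10 ?P11.
    rewrite ?conjcM' ?conjcN' ?conjcM' ?conjcR ?Je ?opprK; apply: (@idP_ring R); ring.
  rewrite H_lin (H_herm ui uj (hB q)) ?P00 ?P01 ?P10 ?P11.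
  rewrite ?conjcM' ?conjcN' ?conjcM' ?conjcR ?Je ?opprK; apply: (@idP_ring R); ring.
rewrite key !big_split /= -!mulr_sumr !big_split /= -!mulr_suml -conjc_sum.
rewrite Ea Eb Ek EG.
have Q : ((z11 th ph)^T *m \matrix_(x < 3, y < 3) mf x y *m z11 th ph) 0 0
   = a * cos th ^+ 2 + b * sin th ^+ 2 * (cos ph ^+ 2 + sin ph ^+ 2)
     + 2 * g1 * cos th * sin th * cos ph + 2 * g2 * cos th * sin th * sin ph.
  rewrite !mxE; rewrite !big_ord_recr !big_ord0 /= !mxE /=.
  rewrite ?big_ord_recr ?big_ord0 /= ?mxE /mf /=.
  ring.
rewrite Q /real_complex_def !expr2.
simpc.
congr (_ +i* _); ring.
Qed.
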